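(* Let $B$ be a metric space and $f:B\to B$ a continuous map such that $(B,f)$ is minimal. Then there exists an irrational rotation $g$ of the circle $\mathbb S^1$ such that the direct product system $(B\times\mathbb S^1,f\times g)$ is minimal.
   Context: A dynamical system $(X,f)$ with $f$ continuous is minimal if the forward orbit $\{x,f(x),f^2(x),\dots\}$ of every point $x\in X$ is dense in $X$. $(f\times g)(x,s)=(f(x),g(s))$. *)

(* Defs.v *)
From HB Require Import structures.
From mathcomp Require Import all_boot all_order all_algebra.
From mathcomp Require Import all_classical all_reals all_analysis.
From mathcomp Require Import subtype_topology.
Set Implicit Arguments. Unset Strict Implicit. Unset Printing Implicit Defensive.
Import Order.TTheory GRing.Theory Num.Theory.
Import numFieldNormedType.Exports.
Local Open Scope classical_set_scope.
Local Open Scope ring_scope.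

Definition forward_orbit (X : Type) (f : X -> X) (x : X) : set X :=
  [set y | exists n : nat, y = iter n f x].

Definition minimal (X : topologicalType) (f : X -> X) : Prop :=
  continuous f /\ forall x : X, dense (forward_orbit f x).

Definition circle_set (R : realType) : set (R * R) :=
  [set p | p.1 ^+ 2 + p.2 ^+ 2 = 1].
Notation circle R := (set_type (@circle_set R)).

Definition irrational (R : realType) (a : R) : Prop :=
  forall q : rat, a <> ratr q.

Definition rot2 (R : realType) (a : R) (p : R * R) : R * R :=
  let t := 2 * pi * a in
  (p.1 * cos t - p.2 * sin t, p.1 * sin t + p.2 * cos t).

Definition irrational_rotation (R : realType) (g : circle R -> circle R) : Prop :=
  exists a : R, irrational a /\ forall z : circle R, set_val (g z) = rot2 a (set_val z).

Definition prod_map (X Y : Type) (f : X -> X) (g : Y -> Y) (p : X * Y) : X * Y :=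
  (f p.1, g p.2).

(* Main.v *)
Require Import Defs.
From HB Require Import structures.
From mathcomp Require Import all_boot all_order all_algebra.
From mathcomp Require Import all_classical all_reals all_analysis.
From mathcomp Require Import subtype_topology.
From mathcomp Require Import ring lra.
Import Order.TTheory GRing.Theory Num.Theory.
Import numFieldNormedType.Exports.
Local Open Scope classical_set_scope.
Local Open Scope ring_scope.
Set Implicit Arguments. Unset Strict Implicit. Unset Printing Implicit Defensive.
Definition cmap (R : realType) (t : R) : R * R := (cos (2 * pi * t), sin (2 * pi * t)).

Lemma cmap_in (R : realType) (t : R) : cmap t \in @circle_set R.
Proof. by rewrite inE /circle_set /= cos2Dsin2. Qed.

Definition cpt (R : realType) (t : R) : circle R := exist _ (cmap t) (cmap_in t).

Lemma rot2_cmap (R : realType) (a t : R) : rot2 a (cmap t) = cmap (t + a).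
Proof.
rewrite /rot2 /cmap; set T := 2 * pi; rewrite mulrDr cosD sinD; congr (_, _) => /=; ring.
Qed.

Lemma cmap_addn (R : realType) (t : R) (n : nat) : cmap (t + n%:R) = cmap t.
Proof.
have h : 2 * pi * (t + n%:R) = 2 * pi * t + (pi *+ 2) *+ n.
  by rewrite mulrDr -mulrnA mulr_natr mulrnAr mulr2n -mulrnA; congr (_ + _); rewrite -mulr_natl; ring.
by rewrite /cmap h (periodicn (@cosD2pi R)) (periodicn (@sinD2pi R)).
Qed.

Lemma cmap_addz (R : realType) (t : R) (k : int) : cmap (t + k%:~R) = cmap t.
Proof.
case: k => n; first exact: cmap_addn.
rewrite -(cmap_addn (t + (Negz n)%:~R) n.+1); congr cmap; rewrite NegzE intrN -pmulrn; ring.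
Qed.

Lemma cmap_surj (R : realType) (p : R * R) : circle_set p -> exists t, cmap t = p.
Proof.
case: p => x y; rewrite /circle_set /= => h.
have hx : -1 <= x <= 1.
  have : x ^+ 2 <= 1 by rewrite -h lerDl sqr_ge0.
  by move=> hx2; apply/andP; split; nra.
have hy : y ^+ 2 = 1 - x ^+ 2 by rewrite -h; ring.
have pi0 : 0 < pi :> R := pi_gt0 R.
have sa : sin (acos x) = `|y|.
  by rewrite sin_acos // -hy sqrtr_sqr.
have [y0|y0] := leP 0 y.
  exists (acos x / (2 * pi)); rewrite /cmap mulrCA mulfV ?mulr1; last by rewrite mulf_neq0 // gt_eqF.
  by rewrite acosK ?inE // sa ger0_norm.
exists (- acos x / (2 * pi)); rewrite /cmap mulrCA mulfV ?mulr1; last by rewrite mulf_neq0 // gt_eqF.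
by rewrite cosN sinN acosK ?inE // sa ltr0_norm // opprK.
Qed.

Lemma continuous_pair (T U V : topologicalType) (f : T -> U) (g : T -> V) :
  continuous f -> continuous g -> continuous (fun x => (f x, g x)).
Proof.
move=> cf cg t.
exact: (@cvg_pair _ _ _ (nbhs t) (nbhs (f t)) (nbhs (g t)) _ _ _ f g (cf t) (cg t)).
Qed.

Lemma continuous_mulc (R : realType) (c : R) : continuous (fun x : R => c * x).
Proof. by move=> t; apply: cvgMl_tmp; exact: cvg_id. Qed.

Lemma continuous_cmap (R : realType) : continuous (@cmap R).
Proof.
rewrite /cmap; apply: continuous_pair.
- move=> t; have h1 := @continuous_mulc R (2 * pi) t; have h2 := @continuous_cos R (2 * pi * t); exact: (continuous_comp h1 h2).
- move=> t; have h1 := @continuous_mulc R (2 * pi) t; have h2 := @continuous_sin R (2 * pi * t); exact: (continuous_comp h1 h2).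
Qed.

Lemma continuous_cpt (R : realType) : continuous (@cpt R).
Proof.
apply: (@continuous_comp_initial _ _ _ (@set_val _ (@circle_set R))).
exact: continuous_cmap.
Qed.

Lemma rot2_in (R : realType) (a : R) (z : circle R) : rot2 a (set_val z) \in @circle_set R.
Proof.
case: z => [[x y]] hz; have h : x ^+ 2 + y ^+ 2 = 1 by move: hz; rewrite inE.
rewrite set_valE /= inE /circle_set /rot2 /=.
set c := cos _; set s := sin _.
have cs : c ^+ 2 + s ^+ 2 = 1 by rewrite cos2Dsin2.
transitivity ((x ^+ 2 + y ^+ 2) * (c ^+ 2 + s ^+ 2)); first ring.
by rewrite h cs mulr1.
Qed.

Definition rotg (R : realType) (a : R) (z : circle R) : circle R :=
  exist _ (rot2 a (set_val z)) (rot2_in a z).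

Lemma rotg_cpt (R : realType) (a t : R) : rotg a (cpt t) = cpt (t + a).
Proof. apply: eq_sig_hprop; first by move=> *; exact: Prop_irrelevance. exact: rot2_cmap. Qed.

Lemma continuous_rot2 (R : realType) (a : R) : continuous (@rot2 R a).
Proof.
rewrite /rot2; apply: continuous_pair => p.
- apply: cvgB; apply: cvgMr_tmp; [exact: cvg_fst | exact: cvg_snd].
- apply: cvgD; apply: cvgMr_tmp; [exact: cvg_fst | exact: cvg_snd].
Qed.

Lemma continuous_rotg (R : realType) (a : R) : continuous (@rotg R a).
Proof.
apply: (@continuous_comp_initial _ _ _ (@set_val _ (@circle_set R))).
move=> z; have h1 := @initial_continuous _ _ (@set_val _ (@circle_set R)) z.
have h2 := @continuous_rot2 R a (set_val z).
exact: (continuous_comp h1 h2).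
Qed.

Lemma refine1 (R : realType) (a b u v : R) (r : nat) :
  a < b -> 0 <= u -> u < v -> v <= 1 -> 2 <= r%:R * (b - a) ->
  exists a' b', [/\ a <= a', a' < b', b' <= b &
    forall x, a' <= x <= b' -> exists k : int, u <= r%:R * x - k%:~R <= v].
Proof.
move=> ab u0 uv v1 rb.
have r0 : 0 < r%:R :> R.
  rewrite ltr0n lt0n; apply/negP => /eqP r0; move: rb; rewrite r0 mul0r; lra.
set k := Num.ceil (r%:R * a).
have [hk1 hk2] : (k - 1)%:~R < r%:R * a /\ r%:R * a <= k%:~R.
  by have /andP[] := ceil_itv (r%:R * a).
rewrite intrD in hk1.
exists ((k%:~R + u) / r%:R), ((k%:~R + v) / r%:R); split.
- by rewrite ler_pdivlMr // mulrC; lra.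
- by rewrite ltr_pM2r ?invr_gt0 //; lra.
- rewrite ler_pdivrMr // mulrC; move: rb; rewrite mulrBr; lra.
move=> x /andP[h1 h2]; exists k; apply/andP; split.
- by move: h1; rewrite ler_pdivrMr // mulrC; lra.
- by move: h2; rewrite ler_pdivlMr // mulrC; lra.
Qed.

Definition win_ok (R : realType) (k : nat) (y : R) :=
  exists z : int, (k.+1%:R)^-1 / 2 <= y - z%:~R <= (k.+1%:R)^-1.

Lemma refine_many (R : realType) (Ret : nat -> Prop)
  (HR : forall N, exists n, (N <= n)%N /\ Ret n) (m : nat) (a b : R) :
  a < b -> exists a' b', [/\ a <= a', a' < b', b' <= b &
    forall k, (k < m)%N -> exists n, Ret n /\
      forall x, a' <= x <= b' -> win_ok k (n%:R * x)].
Proof.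
move=> ab; elim: m => [|m [a1 [b1 [h1 h2 h3 h4]]]].
  by exists a, b; split => //; lra.
have hb : 0 <= 2 / (b1 - a1) by apply: divr_ge0 => //; lra.
have [n [Nn Rn]] := HR (Num.Def.archi_bound (2 / (b1 - a1))).
have rb : 2 <= n%:R * (b1 - a1).
  have := archi_boundP hb; rewrite -(ler_nat R) in Nn => hN.
  have : 2 / (b1 - a1) <= n%:R by lra.
  by rewrite ler_pdivrMr; lra.
have w0 : 0 < (m.+1%:R : R)^-1 by rewrite invr_gt0 ltr0n.
have w1 : (m.+1%:R : R)^-1 <= 1 by rewrite invf_le1 ?ler1n ?ltr0n.
set w := (m.+1%:R : R)^-1 in w0 w1 *.
have u0 : 0 <= w / 2 by lra.
have uv : w / 2 < w by lra.
have [a2 [b2 [g1 g2 g3 g4]]] := refine1 h2 u0 uv w1 rb.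
exists a2, b2; split; [lra | done | lra |].
move=> k; rewrite ltnS leq_eqVlt => /orP[/eqP ->|km].
  by exists n; split => // x /g4.
have [n' [Rn' H]] := h4 k km; exists n'; split => // x hx; apply: H.
lra.
Qed.

Lemma construct_alpha (R : realType) (P : R -> nat -> Prop)
  (HP : forall d, 0 < d -> forall N, exists n, (N <= n)%N /\ P d n)
  (Pmono : forall d d' n, d <= d' -> P d n -> P d' n) :
  exists al : R, forall e, 0 < e -> exists c, 0 < c /\ forall d, 0 < d ->
    exists n, P d n /\ exists z : int, c <= n%:R * al - z%:~R <= e.
Proof.
pose Q (j : nat) (p q : R * R) := p.1 < p.2 -> [/\ p.1 <= q.1, q.1 < q.2, q.2 <= p.2 &
  forall k, (k < j.+1)%N -> exists n, P (j.+1%:R)^-1 n /\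
     forall x, q.1 <= x <= q.2 -> win_ok k (n%:R * x)].
have step : forall j p, exists q, Q j p q.
  move=> j [a b]; case: (boolP (a < b)) => ab; last by exists (a, b) => /= h; rewrite h in ab.
  have HR : forall N, exists n, (N <= n)%N /\ P (j.+1%:R)^-1 n.
    by apply: HP; rewrite invr_gt0 ltr0n.
  have [a' [b' [h1 h2 h3 h4]]] := refine_many HR j.+1 ab.
  by exists (a', b') => /= _; split.
pose stp j p := proj1_sig (cid (step j p)).
have stpP : forall j p, Q j p (stp j p) by move=> j p; exact: (proj2_sig (cid (step j p))).
pose I : nat -> R * R := nat_rect (fun _ => (R * R)%type) (0, 1) (fun j p => stp j p).
have IS : forall j, I j.+1 = stp j (I j) by [].
have Ilt : forall j, (I j).1 < (I j).2.
  elim => [|j IH]; first by rewrite /= ltr01.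
  by rewrite IS; have [] := stpP j (I j) IH.
have mono : forall i d, (I i).1 <= (I (i + d)%N).1 /\ (I (i + d)%N).2 <= (I i).2.
  move=> i; elim => [|d [IH1 IH2]]; first by rewrite addn0; split.
  rewrite addnS IS; have [g1 _ g3 _] := stpP (i + d)%N (I (i + d)%N) (Ilt _).
  split; [exact: le_trans IH1 g1 | exact: le_trans g3 IH2].
have cross : forall i j, (I i).1 <= (I j).2.
  move=> i j; have [m1 _] := mono i j; have [_ m2] := mono j i.
  rewrite addnC in m2; have := Ilt (i + j)%N; lra.
pose E := range (fun j => (I j).1).
have hsup : has_sup E.
  split; first by exists (I 0%N).1; exists 0%N.
  by exists (I 0%N).2 => x [j _ <-]; exact: cross.
set al := sup E.
have alP : forall j, (I j).1 <= al <= (I j).2.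
  move=> j; apply/andP; split.
    by apply: sup_upper_bound => //; exists j.
  by apply: ge_sup; [case: hsup | move=> x [i _ <-]; exact: cross].
exists al => e e0.
have [k hk] : exists k : nat, (k.+1%:R : R)^-1 <= e.
  have he : 0 <= e^-1 by rewrite invr_ge0; lra.
  exists (Num.Def.archi_bound e^-1).
  have := archi_boundP he; set K := Num.Def.archi_bound _ => hK.
  rewrite -[e]invrK lef_pV2 ?posrE ?ltr0n ?invr_gt0 //.
  by rewrite -addn1 natrD; lra.
exists ((k.+1%:R : R)^-1 / 2); split; first by rewrite divr_gt0 // invr_gt0 ltr0n.
move=> d d0.
have hd : 0 <= d^-1 by rewrite invr_ge0; lra.
set j := maxn k (Num.Def.archi_bound d^-1).
have [_ _ _ H] := stpP j (I j) (Ilt j).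
have [n [Pn Hn]] := H k ltac:(by rewrite ltnS leq_maxl).
exists n; split.
  apply: Pmono Pn.
  have := archi_boundP hd; set K := Num.Def.archi_bound _ => hK.
  have Kj : (K <= j)%N by rewrite leq_maxr.
  rewrite -[d]invrK lef_pV2 ?posrE ?ltr0n ?invr_gt0 //.
  have : (K%:R : R) <= j%:R by rewrite ler_nat.
  by rewrite -addn1 natrD; lra.
have [z /andP[z1 z2]] := Hn al (alP j.+1).
exists z; apply/andP; split => //; exact: le_trans z2 hk.
Qed.

Lemma irr_of_Q (R : realType) (al : R) :
  (forall e, 0 < e -> exists c, 0 < c /\ exists n : nat, exists z : int,
     c <= n%:R * al - z%:~R <= e) -> Defs.irrational al.
Proof.
move=> H q hq.
set D := denq q; set N := numq q.
have D0 : 0 < (D%:~R : R) by rewrite ltr0z denq_gt0.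
have hal : al * D%:~R = N%:~R.
  by rewrite hq -(ratr_int R D) -rmorphM /= -numqE ratr_int.
have e0 : 0 < (2 * D%:~R : R)^-1 by rewrite invr_gt0; lra.
have [c [c0 [n [z /andP[h1 h2]]]]] := H _ e0.
set m : int := n%:Z * N - z * D.
have hm : (n%:R * al - z%:~R) * D%:~R = m%:~R.
  by rewrite /m intrD intrM mulrBl -mulrA hal intrN intrM.
have m0 : 0 < m.
  rewrite -(ltr0z R) -hm; apply: mulr_gt0 => //; lra.
have m1 : (1 : R) <= m%:~R by rewrite ler1z.
have : (n%:R * al - z%:~R) * D%:~R <= (2 * D%:~R)^-1 * D%:~R.
  by rewrite ler_pM2r.
rewrite hm invfM -mulrA mulVf ?gt_eqF // mulr1; lra.
Qed.

Lemma iter_cont (T : topologicalType) (f : T -> T) (n : nat) :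
  continuous f -> continuous (iter n f).
Proof.
move=> cf; elim: n => [|n IH] x /=; first exact: cvg_id.
exact: (continuous_comp (IH x) (cf _)).
Qed.

Lemma iter_ball (R : realType) (B : pseudoMetricType R) (f : B -> B) (n : nat)
  (x : B) (e : R) : continuous f -> 0 < e ->
  exists2 r, 0 < r & forall z, ball x r z -> ball (iter n f x) e (iter n f z).
Proof.
move=> cf e0; have := @iter_cont _ f n cf x.
move=> /fcvg_ballP /(_ e e0) /nbhs_ballP [r r0 H].
by exists r => // z /H.
Qed.

Lemma dense_ball (R : realType) (B : pseudoMetricType R) (S : set B) (y : B) (e : R) :
  dense S -> 0 < e -> exists2 p, S p & ball y e p.
Proof.
move=> dS e0.
have : (ball y e)° `&` S !=set0.
  apply: dS; last exact: open_interior.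
  by exists y; rewrite /interior /=; apply: nbhsx_ballx.
by case=> p [/interior_subset hp Sp]; exists p.
Qed.

Lemma orbit_ball (R : realType) (B : pseudoMetricType R) (f : B -> B) (x y : B) (e : R) :
  dense (forward_orbit f x) -> 0 < e -> exists n, ball y e (iter n f x).
Proof. by move=> d e0; have [p [n ->] hp] := dense_ball y d e0; exists n. Qed.

Lemma stepA (R : realType) (B : pseudoMetricType R) (f : B -> B) (x0 : B) (al e c : R) :
  continuous f -> 0 < c ->
  (forall d, 0 < d -> exists n, ball x0 d (iter n f x0) /\
      exists z : int, c <= n%:R * al - z%:~R <= e) ->
  forall s d, 0 < d -> exists n, ball x0 d (iter n f x0) /\
      exists z : int, - e <= n%:R * al - s - z%:~R <= e.
Proof.
move=> cf c0 H.
have main : forall m : nat, forall s, 0 <= s <= m%:R * c -> forall d, 0 < d ->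
    exists n, ball x0 d (iter n f x0) /\
      exists z : int, - e <= n%:R * al - s - z%:~R <= e.
  elim => [|m IH] s /andP[s0 sm] d d0.
    have e0 : 0 <= e by have [n [_ [z /andP[]]]] := H 1 ltr01; lra.
    exists 0%N; split; first exact: ballxx.
    exists 0; rewrite mul0r /=; apply/andP; split; lra.
  have e0 : 0 <= e by have [n [_ [z /andP[]]]] := H 1 ltr01; lra.
  have [sle|sgt] := leP s e.
    exists 0%N; split; first exact: ballxx.
    exists 0; rewrite mul0r /=; apply/andP; split; lra.
  have d2 : 0 < d / 2 by lra.
  have [n2 [b2 [z2 /andP[t1 t2]]]] := H _ d2.
  have [r r0 Hr] := iter_ball n2 x0 cf d2.
  have hs : 0 <= s - (n2%:R * al - z2%:~R) <= m%:R * c.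
    by move: sm; rewrite -natr1 mulrDl mul1r => sm; apply/andP; split; lra.
  have [n1 [b1 [z1 /andP[u1 u2]]]] := IH _ hs r r0.
  exists (n2 + n1)%N; split.
    rewrite iterD.
    by have := ball_triangle b2 (Hr _ b1); rewrite -splitr.
  exists (z1 + z2); rewrite natrD intrD; apply/andP; split; lra.
move=> s d d0.
have [k hk] : exists k : nat, s - (Num.floor s)%:~R <= k%:R * c.
  exists (Num.Def.archi_bound ((s - (Num.floor s)%:~R) / c)).
  have h0 : 0 <= (s - (Num.floor s)%:~R) / c.
    by apply: divr_ge0; [rewrite subr_ge0 floor_le | lra].
  have := archi_boundP h0; rewrite ltr_pdivrMr //; lra.
have hs : 0 <= s - (Num.floor s)%:~R <= k%:R * c.
  by rewrite hk andbT subr_ge0 floor_le.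
have [n [bn [z /andP[h1 h2]]]] := main k _ hs d d0.
exists n; split => //; exists (z - Num.floor s); rewrite intrB; apply/andP; split; lra.
Qed.

Lemma fin_min (R : realType) (Pi : nat -> R -> Prop) (M : nat) :
  (forall i r r', 0 < r' <= r -> Pi i r -> Pi i r') ->
  (forall i, (i < M)%N -> exists2 r, 0 < r & Pi i r) ->
  exists2 r, 0 < r & forall i, (i < M)%N -> Pi i r.
Proof.
move=> mono; elim: M => [|M IH] H; first by exists 1 => //; rewrite ltr01.
have [r1 r10 H1] := IH (fun i iM => H i (ltnW iM)).
have [r2 r20 H2] := H M (ltnSn M).
exists (Num.min r1 r2); first by rewrite lt_min r10 r20.
move=> i; rewrite ltnS leq_eqVlt => /orP[/eqP ->|iM].
  by apply: mono H2; rewrite lt_min r10 r20 /= ge_min lexx orbT.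
by apply: mono (H1 i iM); rewrite lt_min r10 r20 /= ge_min lexx.
Qed.

Lemma orbit_approx (R : realType) (B : pseudoMetricType R) (f : B -> B) (x0 : B) (al : R) :
  continuous f -> (forall x : B, dense (forward_orbit f x)) ->
  (forall e, 0 < e -> exists c, 0 < c /\ forall d, 0 < d ->
    exists n, ball x0 d (iter n f x0) /\ exists z : int, c <= n%:R * al - z%:~R <= e) ->
  forall (y b : B) (th0 th d e : R), 0 < d -> 0 < e ->
  exists n, ball b d (iter n f y) /\
    exists z : int, - e < th0 + n%:R * al - th - z%:~R < e.
Proof.
move=> cf dns HQ y b th0 th d e d0 e0.
set eta := e / 4.
have eta0 : 0 < eta by rewrite /eta; lra.
have [c [c0 Hc]] := HQ _ eta0.
have SA := stepA cf c0 Hc.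
have d2 : 0 < d / 2 by lra.
have [n3 b3] := orbit_ball b (dns x0) d2.
have [r3 r30 Hr3] := iter_ball n3 x0 cf d2.
have r32 : 0 < r3 / 2 by lra.
pose M := Num.Def.archi_bound eta^-1.
have hM : eta^-1 < M%:R by apply: archi_boundP; rewrite invr_ge0; lra.
pose s (i : nat) := th - n3%:R * al - i%:R * eta.
pose Pi (i : nat) (r : R) := exists n2, [/\ ball x0 (r3 / 2) (iter n2 f x0),
   (exists z : int, - eta <= n2%:R * al - s i - z%:~R <= eta) &
   forall w, ball x0 r w -> ball (iter n2 f x0) (r3 / 2) (iter n2 f w)].
have [r r0 Hr] : exists2 r, 0 < r & forall i, (i < M)%N -> Pi i r.
  apply: fin_min.
    move=> i r1 r' /andP[r'0 r'r] [n2 [h1 h2 h3]]; exists n2; split => // w hw.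
    by apply: h3; apply: le_ball hw.
  move=> i _.
  have [n2 [h1 h2]] := SA (s i) _ r32.
  have [r' r'0 H'] := iter_ball n2 x0 cf r32.
  by exists r' => //; exists n2; split.
have [n1 b1] := orbit_ball x0 (dns y) r0.
set phi := th0 + n1%:R * al.
set fr := phi - (Num.floor phi)%:~R.
have fr0 : 0 <= fr by rewrite /fr subr_ge0 floor_le.
have fr1 : fr < 1.
  by rewrite /fr ltrBlDl -intrD1 ?floorD1_gt //; have /andP[] := floor_itv phi.
set i := Num.Def.trunc (fr / eta).
have hi0 : i%:R <= fr / eta by rewrite truncn_le; apply: divr_ge0 => //; lra.
have hi1 : fr / eta < i.+1%:R by exact: truncnS_gt.
have iM : (i < M)%N.
  rewrite -(ltr_nat R); apply: le_lt_trans hM.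
  apply: le_trans hi0 _; rewrite ler_pdivrMr // mulVf ?gt_eqF //; lra.
have [n2 [h1 [z2 /andP[g1 g2]] h3]] := Hr i iM.
exists (n3 + (n2 + n1))%N; split.
  rewrite !iterD.
  have := ball_triangle h1 (h3 _ b1); rewrite -splitr => /Hr3 hb.
  by have := ball_triangle b3 hb; rewrite -splitr.
exists (z2 + Num.floor phi).
have e1 : i%:R * eta <= fr by move: hi0; rewrite ler_pdivlMr.
have e2 : fr < i%:R * eta + eta by move: hi1; rewrite ltr_pdivrMr // -natr1 mulrDl mul1r.
move: g1 g2 e1 e2; rewrite /s !natrD intrD /fr /phi => g1 g2 e1 e2.
have etaE : eta * 4 = e by rewrite /eta; field.
rewrite !mulrDl; apply/andP; split; lra.
Qed.


Lemma cfst (T U : topologicalType) (p : T * U) : {for p, continuous (@fst T U)}.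
Proof. exact: cvg_fst. Qed.
Lemma csnd (T U : topologicalType) (p : T * U) : {for p, continuous (@snd T U)}.
Proof. exact: cvg_snd. Qed.

Lemma prod_cont (R : realType) (B : pseudoMetricType R) (f : B -> B) (al : R) :
  continuous f -> continuous (prod_map f (@rotg R al)).
Proof.
move=> cf; rewrite /prod_map; apply: continuous_pair => p.
- exact: (continuous_comp (@cfst _ _ p) (cf p.1)).
- exact: (continuous_comp (@csnd _ _ p) (@continuous_rotg R al p.2)).
Qed.

Lemma iter_prod (R : realType) (B : Type) (f : B -> B) (al : R) (y : B) (t : R) (n : nat) :
  iter n (prod_map f (@rotg R al)) (y, cpt t) = (iter n f y, cpt (t + n%:R * al)).
Proof.
elim: n => [|n IH]; first by rewrite /= mul0r addr0.
rewrite iterS IH /prod_map /= rotg_cpt; congr (_, cpt _).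
by rewrite -natr1 mulrDl mul1r addrA.
Qed.

Lemma cpt_surj (R : realType) (w : circle R) : exists t, cpt t = w.
Proof.
case: w => p hp; have := hp; rewrite inE => /cmap_surj [t ht]; exists t.
apply: eq_sig_hprop; first by move=> *; exact: Prop_irrelevance.
exact: ht.
Qed.

Lemma cpt_addz (R : realType) (t : R) (k : int) : cpt (t + k%:~R) = cpt t.
Proof.
apply: eq_sig_hprop; first by move=> *; exact: Prop_irrelevance.
exact: cmap_addz.
Qed.

Lemma prod_dense (R : realType) (B : pseudoMetricType R) (f : B -> B) (x0 : B) (al : R) :
  continuous f -> (forall x : B, dense (forward_orbit f x)) ->
  (forall e, 0 < e -> exists c, 0 < c /\ forall d, 0 < d ->
    exists n, ball x0 d (iter n f x0) /\ exists z : int, c <= n%:R * al - z%:~R <= e) ->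
  forall p : B * circle R, dense (forward_orbit (prod_map f (@rotg R al)) p).
Proof.
move=> cf dns HQ [y w0] O [[b w] Obw] oO.
have [th0 <-] := cpt_surj w0.
have [th hth] := cpt_surj w.
pose h := fun q : B * R => (q.1, cpt q.2).
have ch : continuous h.
  apply: continuous_pair => q.
  - exact: (@cfst _ _ q).
  - exact: (continuous_comp (@csnd _ _ q) (@continuous_cpt R q.2)).
have nO : nbhs (h (b, th)) O by apply: open_nbhs_nbhs; split => //; rewrite /h /= hth.
have := ch (b, th) O nO; move=> /nbhs_ballP [r r0 Hr].
have [n [bn [z /andP[z1 z2]]]] := orbit_approx cf dns HQ y b th0 th r0 r0.
exists (iter n (prod_map f (@rotg R al)) (y, cpt th0)); split; last by exists n.
rewrite iter_prod -(cpt_addz _ (- z)).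
have : ball (b, th) r (iter n f y, th0 + n%:R * al + (- z)%:~R).
  split => //=; rewrite /ball /= intrN; rewrite ltr_norml; apply/andP; split; lra.
by move/Hr.
Qed.

Unset Implicit Arguments.

Theorem proposition1 (R : realType) (B : pseudoMetricType R)
  (B_metric : hausdorff_space B) (f : B -> B) :
  minimal f ->
  exists g : circle R -> circle R,
    irrational_rotation g /\
    minimal (prod_map f g : B * circle R -> B * circle R).
Proof.
move=> [cf dns].
have [[x0 _]|nB] := pselect (exists x : B, True).
  pose P (d : R) (n : nat) := ball x0 d (iter n f x0).
  have HP : forall d, 0 < d -> forall N, exists n, (N <= n)%N /\ P d n.
    move=> d d0 N; have [m hm] := orbit_ball x0 (dns (iter N f x0)) d0.
    by exists (m + N)%N; split; [rewrite leq_addl | rewrite /P iterD].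
  have Pmono : forall d d' n, d <= d' -> P d n -> P d' n.
    by move=> d d' n dd; apply: le_ball.
  have [al HQ] := construct_alpha HP Pmono.
  exists (@rotg R al); split.
    exists al; split => //; apply: irr_of_Q => e e0.
    have [c [c0 H]] := HQ e e0; exists c; split => //.
    by have [n [_ hn]] := H 1 ltr01; exists n.
  split; first exact: prod_cont.
  exact: prod_dense HQ.
pose P (d : R) (n : nat) := True.
have HP : forall d, 0 < d -> forall N, exists n, (N <= n)%N /\ P d n.
  by move=> d d0 N; exists N.
have [al HQ] := @construct_alpha R P HP (fun _ _ _ _ h => h).
exists (@rotg R al); split.
  exists al; split => //; apply: irr_of_Q => e e0.
  have [c [c0 H]] := HQ e e0; exists c; split => //.
  by have [n [_ hn]] := H 1 ltr01; exists n.
split; first exact: prod_cont.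
by move=> [y w]; exfalso; apply: nB; exists y.
Qed.
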